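(* Let $G$ be a connected planar trivalent graph. Then $T_G(1)$ equals the number of Tait colorings of $G$, where $$T_G(z)=\sum_{M}\langle G:M\rangle_2(z),$$ the sum being over all perfect matchings $M$ of $G$.
   Context: Graphs are finite and may have multiple edges; trivalent means every vertex has degree $3$. A Tait coloring of $G$ is an assignment of one of three fixed colors to each edge so that the three edges at every vertex receive three distinct colors. The $2$-factor polynomial $\langle G:M\rangle_2(z)\in\mathbb{Z}[z,z^{-1}]$ of $G$ with perfect matching $M$ is defined as follows. Embed $G$ in the $2$-sphere. For a matching edge $e=uv$, let $\alpha,\beta$ be the other two edge-ends at $u$ and $\gamma,\delta$ the other two at $v$, labelled so that in a small disk around $e$ they appear in cyclic order $\alpha,\beta,\delta,\gamma$. The $0$-resolution at $e$ deletes $e,u,v$ and joins $\alpha$ to $\gamma$ and $\beta$ to $\delta$ by disjoint arcs; the $1$-resolution joins $\alpha$ to $\delta$ and $\beta$ to $\gamma$ by two arcs crossing once. For a state $s:M\to\{0,1\}$, resolving every matching edge accordingly yields $c(s)$ immersed closed curves, and $\langle G:M\rangle_2(z)=\sum_s(-z)^{|s|}(z+z^{-1})^{c(s)}$, where $|s|$ is the number of edges assigned $1$. This is independent of the chosen embedding. *)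

(* Defs.v *)
From mathcomp Require Import all_boot all_order all_algebra.
Set Implicit Arguments. Unset Strict Implicit. Unset Printing Implicit Defensive.
Import GRing.Theory.

(* Graphs embedded in the sphere are encoded as combinatorial maps
   (rotation systems) on a finite set of darts (half-edges) [D]:
   - [alpha] : fixed-point-free involution pairing the two darts of an edge;
   - [sigma] : rotation, cyclically permuting the darts at each vertex.
   Multiple edges and loops are allowed. *)

Section Maps.
Variable D : finType.

Definition ncomp (r : rel D) (A : {set D}) : nat :=
  #|[set [set y | connect r x y] | x in A]|.

Definition trivalent_map (alpha sigma : D -> D) : Prop :=
  (forall d, alpha (alpha d) = d) /\ (forall d, alpha d != d) /\
  (forall d, sigma (sigma (sigma d)) = d) /\ (forall d, sigma d != d).

Definition map_connected (alpha sigma : D -> D) : Prop :=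
  forall x y, connect (fun u v => (v == alpha u) || (v == sigma u)) x y.

Definition nvertices (sigma : D -> D) := ncomp (frel sigma) setT.
Definition nedges (alpha : D -> D) := ncomp (frel alpha) setT.
Definition nfaces (alpha sigma : D -> D) := ncomp (frel (sigma \o alpha)) setT.

Definition planar_map (alpha sigma : D -> D) : Prop :=
  nvertices sigma + nfaces alpha sigma = nedges alpha + 2.

(* perfect matching, as the set of darts of its edges *)
Definition perfect_matching (alpha sigma : D -> D) (M : {set D}) : bool :=
  [forall d, (d \in M) == (alpha d \in M)] &&
  [forall d, #|[set d; sigma d; sigma (sigma d)] :&: M| == 1].

(* a state s : M -> {0,1} is encoded by S = darts of the edges assigned 1 *)
Definition state (alpha : D -> D) (M S : {set D}) : bool :=
  (S \subset M) && [forall d, (d \in S) == (alpha d \in S)].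

(* For a non-matching dart d, the dart joined to it by the arc produced by
   the resolution of the matching edge at d's vertex.  With m the matching
   dart at the vertex and b = alpha m, the 0-resolution joins
   sigma m -- sigma^2 b and sigma^2 m -- sigma b (the two arcs not crossing),
   the 1-resolution joins sigma m -- sigma b and sigma^2 m -- sigma^2 b. *)
Definition res_partner (alpha sigma : D -> D) (S : {set D}) (M : {set D}) (d : D) : D :=
  if sigma d \in M then
    let m := sigma d in let b := alpha m in
    if m \in S then sigma (sigma b) else sigma b
  else
    let m := sigma (sigma d) in let b := alpha m in
    if m \in S then sigma b else sigma (sigma b).

Definition curve_rel (alpha sigma : D -> D) (M S : {set D}) : rel D :=
  fun d e => [&& d \notin M, e \notin M &
               (e == alpha d) || (e == res_partner alpha sigma S M d)].

Definition ncurves (alpha sigma : D -> D) (M S : {set D}) : nat :=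
  ncomp (curve_rel alpha sigma M S) (~: M).

(* <G:M>_2 evaluated at an invertible z of a commutative unit ring:
   sum_s (-z)^|s| (z + z^-1)^c(s) *)
Definition bracket2 (R : comUnitRingType) (alpha sigma : D -> D) (M : {set D})
  (z : R) : R :=
  \sum_(S : {set D} | state alpha M S)
     (- z) ^+ (#|S| %/ 2) * (z + z^-1) ^+ ncurves alpha sigma M S.

Definition T_poly (R : comUnitRingType) (alpha sigma : D -> D) (z : R) : R :=
  \sum_(M : {set D} | perfect_matching alpha sigma M) bracket2 alpha sigma M z.

(* Tait colouring, as a colouring of darts constant on edges *)
Definition tait_coloring (alpha sigma : D -> D) (c : {ffun D -> 'I_3}) : bool :=
  [forall d, (c (alpha d) == c d) &&
     [&& c d != c (sigma d), c (sigma d) != c (sigma (sigma d)) &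
         c d != c (sigma (sigma d))]].

Definition n_tait (alpha sigma : D -> D) : nat :=
  #|[set c : {ffun D -> 'I_3} | tait_coloring alpha sigma c]|.

End Maps.

(* Main.v *)
Require Import Defs.
From mathcomp Require Import all_boot all_order all_algebra.
From mathcomp Require Import zify.
Import GRing.Theory.
Set Implicit Arguments. Unset Strict Implicit. Unset Printing Implicit Defensive.

Section Count.
Variable D : finType.
Notation Fun := {ffun D -> bool}.

Definition Fr (r : rel D) (A : {set D}) : {set Fun} := locked
  [set f : Fun | [forall x, forall y, r x y ==> (f x == f y)] &&
                 [forall x, (x \notin A) ==> ~~ f x]].

Lemma FrP (r : rel D) (A : {set D}) (f : Fun) : reflect ((forall x y, r x y -> f x = f y) /\ (forall x, x \notin A -> f x = false))
  (f \in Fr r A).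
Proof.
rewrite /Fr -lock inE; apply: (iffP andP) => [[/forallP H1 /forallP H2]|[H1 H2]]; split.
- by move=> x y rxy; have /forallP/(_ y)/implyP/(_ rxy)/eqP := H1 x.
- by move=> x xA; have /implyP/(_ xA)/negbTE := H2 x.
- by apply/forallP => x; apply/forallP => y; apply/implyP => /H1 ->.
- by apply/forallP => x; apply/implyP => /H2 ->.
Qed.

Lemma Fr_connect (r : rel D) (A : {set D}) (f : Fun) : f \in Fr r A -> forall x y, connect r x y -> f x = f y.
Proof.
move=> /FrP [H1 _] x y /connectP [p pth ->].
elim: p x pth => [|z p IH] x //= /andP [rxz pth].
by rewrite (H1 _ _ rxz); apply: IH.
Qed.

Lemma card_Fr (r : rel D) (A : {set D}) : connect_sym r -> (forall x y, r x y -> (x \in A) && (y \in A)) ->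
  #|Fr r A| = 2 ^ ncomp r A.
Proof.
move=> rsym rA.
pose C := [set [set y | connect r x y] | x in A].
have -> : ncomp r A = #|C| by [].
have -> : 2 ^ #|C| = #|pffun_on false C predT| by rewrite card_pffun_on card_bool.
pose Phi (f : Fun) : {ffun {set D} -> bool} := [ffun S => (S \in C) && (if [pick y in S] is Some y then f y else false)].
pose Psi (g : {ffun {set D} -> bool}) : Fun := [ffun x => (x \in A) && g [set y | connect r x y]].
have connA x y : x \in A -> connect r x y -> y \in A.
  move=> xA /connectP [p pth ->]; elim: p x xA pth => [|z p IH] x xA //= /andP [rxz pth].
  by apply: IH pth; have /andP [] := rA _ _ rxz.
have classE x y : connect r x y -> [set z | connect r x z] = [set z | connect r y z].
  move=> cxy; apply/setP => z; rewrite !inE; apply/idP/idP => H.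
    by apply: connect_trans H; rewrite rsym.
  exact: connect_trans H.
apply/eqP; rewrite eqn_leq; apply/andP; split.
- rewrite -(@card_in_imset _ _ Phi (Fr r A)).
    apply: subset_leq_card; apply/subsetP => g /imsetP [f fF ->].
    apply/pffun_onP; split.
      by apply/subsetP => S; rewrite inE ffunE; apply: contraR => /negbTE ->.
    by move=> ? _.
  move=> f1 f2 F1 F2 eqP12; apply/ffunP => x.
  case xA: (x \in A); last first.
    by have [_ ->] := FrP _ _ _ F1; [have [_ ->] := FrP _ _ _ F2|]; rewrite ?xA.
  have SC : [set y | connect r x y] \in C by apply/imsetP; exists x.
  have := congr1 (fun g : {ffun {set D} -> bool} => g [set y | connect r x y]) eqP12.
  rewrite !ffunE SC /=.
  case: pickP => [y|]; last by move/(_ x); rewrite inE connect0.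
  rewrite inE => cr.
  by rewrite -(Fr_connect F1 cr) -(Fr_connect F2 cr).
- rewrite -(@card_in_imset _ _ Psi (pffun_on false C predT)).
    apply: subset_leq_card; apply/subsetP => f /imsetP [g gP ->].
    apply/FrP; split.
      move=> x y rxy; rewrite !ffunE; have /andP [-> ->] := rA _ _ rxy.
      by rewrite (classE x y) // connect1.
    by move=> x /negbTE; rewrite ffunE => ->.
  move=> g1 g2 G1 G2 eq12; apply/ffunP => S.
  case SC: (S \in C); last first.
    have /pffun_onP [/subsetP s1 _] := G1; have /pffun_onP [/subsetP s2 _] := G2.
    have h1 := s1 S; have h2 := s2 S; rewrite !inE SC in h1 h2.
    move: h1 h2; case: (g1 S); case: (g2 S) => // H1 H2; solve [by have := H1 isT | by have := H2 isT].
  move/imsetP: SC => [x xA SE]; rewrite SE.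
  have := congr1 (fun f : Fun => f x) eq12; rewrite !ffunE xA /=.
  done.
Qed.


Definition fx (f g : Fun) : Fun := [ffun d => f d (+) g d].
Definition f0 : Fun := [ffun=> false].

Lemma fxA a b c : fx a (fx b c) = fx (fx a b) c.
Proof. by apply/ffunP => d; rewrite !ffunE addbA. Qed.
Lemma fxC a b : fx a b = fx b a.
Proof. by apply/ffunP => d; rewrite !ffunE addbC. Qed.
Lemma fxK a b : fx a (fx a b) = b.
Proof. by apply/ffunP => d; rewrite !ffunE addKb. Qed.
Lemma fx0 a : fx a f0 = a.
Proof. by apply/ffunP => d; rewrite !ffunE addbF. Qed.
Lemma fxx a : fx a a = f0.
Proof. by apply/ffunP => d; rewrite !ffunE addbb. Qed.

Lemma card_fibre (A : {set Fun}) (h : Fun -> Fun) :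
  {in A &, forall a b, fx a b \in A} ->
  {in A &, forall a b, h (fx a b) = fx (h a) (h b)} ->
  #|A| = #|h @: A| * #|[set a in A | h a == f0]|.
Proof.
move=> Acl hadd.
rewrite -sum1_card (partition_big_imset h) /= -sum_nat_const.
apply: eq_bigr => j /imsetP [a0 a0A ->].
rewrite !sum1dep_card.
have -> : [set i | (i \in A) && (h i == h a0)] = fx a0 @: [set a | (a \in A) && (h a == f0)].
  apply/setP => i; rewrite inE; apply/idP/idP.
    move=> /andP [iA /eqP hi]; apply/imsetP; exists (fx a0 i); last by rewrite fxK.
    by rewrite inE Acl // hadd // hi fxx eqxx.
  move=> /imsetP [k]; rewrite inE => /andP [kA /eqP hk] ->.
  by rewrite Acl // hadd // hk fx0 eqxx.
by rewrite card_imset //; apply: can_inj (fxK a0).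
Qed.


Lemma big_xor_eq (P : pred D) (e : D) : \big[addb/false]_(d | P d) (e == d) = P e.
Proof.
case Pe: (P e).
  rewrite (bigD1 e) //= eqxx big1 // => d /andP [_]; by rewrite eq_sym => /negbTE.
by rewrite big1 // => d Pd; apply/negbTE/eqP => ed; move: Pd; rewrite -ed Pe.
Qed.

Lemma big_xor_const (P : pred D) (b : bool) :
  \big[addb/false]_(d | P d) b = (\big[addb/false]_d P d) && b.
Proof.
have hm : {morph (fun x => x && b) : x y / x (+) y >-> x (+) y}.
  by move=> x y /=; rewrite andb_addl.
rewrite (big_morph (fun x => x && b) hm (erefl (false && b))).
by rewrite big_mkcond; apply: eq_bigr => d _; case: (P d).
Qed.

Lemma big_fx_eval (P : pred D) (F : D -> Fun) (e : D) :
  (\big[fx/f0]_(d | P d) F d) e = \big[addb/false]_(d | P d) F d e.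
Proof.
apply: (big_morph (fun f : Fun => f e) (id1 := false) (op1 := addb)).
  by move=> a b; rewrite ffunE.
by rewrite ffunE.
Qed.

End Count.

Section MapS.
Variable D : finType.
Notation Fun := {ffun D -> bool}.
Variables (alpha sigma : D -> D).
Hypothesis aK : forall d, alpha (alpha d) = d.
Hypothesis aN : forall d, alpha d != d.
Hypothesis s3 : forall d, sigma (sigma (sigma d)) = d.
Hypothesis sN : forall d, sigma d != d.

Lemma sigma_inj : injective sigma.
Proof. by apply: (can_inj (g := fun d => sigma (sigma d))) => d; rewrite s3. Qed.
Lemma alpha_inj : injective alpha.
Proof. exact: can_inj aK. Qed.
Lemma phi_inj : injective (sigma \o alpha).
Proof. by move=> x y /= /sigma_inj /alpha_inj. Qed.

Lemma invP (p : D -> D) (f : Fun) : reflect (forall d, f (p d) = f d) (f \in Fr (frel p) setT).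
Proof.
apply: (iffP (FrP _ _ _)) => [[H _] d|H]; first by rewrite (H d (p d)) //= eqxx.
by split=> [x y /eqP <-|x]; rewrite ?inE // H.
Qed.

Lemma card_inv (p : D -> D) : injective p -> #|Fr (frel p) setT| = 2 ^ ncomp (frel p) setT.
Proof.
move=> pinj; apply: card_Fr; last by move=> *; rewrite !inE.
by move=> x y; apply: fconnect_sym.
Qed.

Lemma inv_fx (p : D -> D) : {in Fr (frel p) setT &, forall a b : Fun, fx a b \in Fr (frel p) setT}.
Proof. by move=> a b /invP Ha /invP Hb; apply/invP => d; rewrite !ffunE Ha Hb. Qed.

Lemma inv_f0 (p : D -> D) : f0 D \in Fr (frel p) setT.
Proof. by apply/invP => d; rewrite !ffunE. Qed.

Definition Cf := Fr (frel (sigma \o alpha)) setT.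
Definition Ea := Fr (frel alpha) setT.
Definition Vs := Fr (frel sigma) setT.

Definition dl (c : Fun) : Fun := [ffun d => c d (+) c (alpha d)].
Definition bd (w : Fun) : Fun := [ffun d => w d (+) w (sigma d) (+) w (sigma (sigma d))].
Definition Zs := [set w in Ea | bd w == f0 D].

Lemma dl_fx a b : dl (fx a b) = fx (dl a) (dl b).
Proof. by apply/ffunP => d; rewrite !ffunE; case: (a d); case: (b d); case: (a _); case: (b _). Qed.
Lemma bd_fx a b : bd (fx a b) = fx (bd a) (bd b).
Proof.
apply/ffunP => d; rewrite !ffunE.
by case: (a d); case: (b d); case: (a (sigma d)); case: (b (sigma d));
   case: (a (sigma (sigma d))); case: (b (sigma (sigma d))).
Qed.
Lemma bd_f0 : bd (f0 D) = f0 D.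
Proof. by apply/ffunP => d; rewrite !ffunE. Qed.

Lemma dl_Z c : c \in Cf -> dl c \in Zs.
Proof.
move=> /invP /= Hc; rewrite inE; apply/andP; split.
  by apply/invP => d; rewrite !ffunE aK addbC.
apply/eqP/ffunP => d; rewrite !ffunE.
have e1 : c (alpha d) = c (sigma d) by rewrite -(Hc (alpha d)) aK.
have e2 : c (alpha (sigma d)) = c (sigma (sigma d)) by rewrite -(Hc (alpha (sigma d))) aK.
have e3 : c (alpha (sigma (sigma d))) = c d by rewrite -(Hc (alpha (sigma (sigma d)))) aK s3.
rewrite e1 e2 e3.
by case: (c d); case: (c (sigma d)); case: (c (sigma (sigma d))).
Qed.

Hypothesis conn : map_connected alpha sigma.

Lemma conn_const (f : Fun) : (forall d, f (alpha d) = f d) -> (forall d, f (sigma d) = f d) ->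
  forall x y, f x = f y.
Proof.
move=> Ha Hs x y; have /connectP [p pth ->] := conn x y.
elim: p x pth => [|z p IH] x //= /andP [/orP [] /eqP -> pth]; rewrite -IH //.
Qed.

Variable d0 : D.

Lemma ker_dl : [set a in Cf | dl a == f0 D] = [set f0 D; [ffun=> true]].
Proof.
apply/setP => c; rewrite !inE; apply/idP/idP.
  move=> /andP [/invP /= Hc /eqP /ffunP Hd].
  have Ha d : c (alpha d) = c d.
    by have := Hd d; rewrite !ffunE; case: (c d); case: (c (alpha d)).
  have Hs d : c (sigma d) = c d by have := Hc (alpha d); rewrite /= aK Ha.
  have K := conn_const Ha Hs.
  case cd0 : (c d0); [apply/orP; right | apply/orP; left]; apply/eqP/ffunP => d;
    by rewrite !ffunE -cd0 (K d d0).
move=> /orP [] /eqP ->; apply/andP; split; try (apply/invP => d; rewrite !ffunE //);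
  by apply/eqP/ffunP => d; rewrite !ffunE.
Qed.

Lemma card_ker_dl : #|[set a in Cf | dl a == f0 D]| = 2.
Proof.
rewrite ker_dl cards2; suff -> : (f0 D != [ffun=> true]) by [].
by apply/eqP => /ffunP /(_ d0); rewrite !ffunE.
Qed.

Definition orb (u : D) : Fun := [ffun d => (d == u) (+) (sigma d == u) (+) (sigma (sigma d) == u)].
Definition ed (u : D) : Fun := [ffun d => (d == u) (+) (d == alpha u)].

Lemma ed_Ea u : ed u \in Ea.
Proof.
apply/invP => d; rewrite !ffunE (inj_eq alpha_inj) -{1}(aK u) (inj_eq alpha_inj).
by rewrite addbC.
Qed.

Lemma bd_ed u : bd (ed u) = fx (orb u) (orb (alpha u)).
Proof.
apply/ffunP => d; rewrite !ffunE.
by case: (d == u); case: (d == alpha u); case: (sigma d == u); case: (sigma d == alpha u);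
  case: (sigma (sigma d) == u); case: (sigma (sigma d) == alpha u).
Qed.

Lemma orb_sigma u : orb (sigma u) = orb u.
Proof.
apply/ffunP => d; rewrite !ffunE.
have E1 : (d == sigma u) = (sigma (sigma d) == u).
  by rewrite -(inj_eq sigma_inj) -{1}(s3 d) (inj_eq sigma_inj) (inj_eq sigma_inj).
have E2 : (sigma d == sigma u) = (d == u) by rewrite (inj_eq sigma_inj).
have E3 : (sigma (sigma d) == sigma u) = (sigma d == u) by rewrite (inj_eq sigma_inj).
rewrite E1 E2 E3.
by case: (d == u); case: (sigma d == u); case: (sigma (sigma d) == u).
Qed.

Lemma orb_Vs u : orb u \in Vs.
Proof.
apply/invP => d; rewrite !ffunE s3.
by case: (d == u); case: (sigma d == u); case: (sigma (sigma d) == u).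
Qed.

Lemma path_w u v : exists2 w, w \in Ea & bd w = fx (orb u) (orb v).
Proof.
have /connectP [p pth ->] := conn u v.
elim: p u pth => [|z p IH] u /=.
  by move=> _; exists (f0 D); [apply: inv_f0 | rewrite bd_f0 fxx].
move=> /andP [/orP [] /eqP -> pth]; have [w wE bw] := IH _ pth.
  exists (fx (ed u) w); first by apply: inv_fx => //; apply: ed_Ea.
  by rewrite bd_fx bw bd_ed fxA -(fxA (orb u)) fxx fx0.
by exists w; rewrite // bw orb_sigma.
Qed.

Definition parity (t : Fun) := \big[addb/false]_d t d.
Definition EvenV := [set t in Vs | ~~ parity t].

Lemma EvenV_bd t : t \in EvenV -> t \in bd @: Ea.
Proof.
rewrite inE => /andP [/invP tV tE].
pose pw d := odflt (f0 D) [pick w in Ea | bd w == fx (orb d0) (orb d)].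
have pwP d : (pw d \in Ea) && (bd (pw d) == fx (orb d0) (orb d)).
  rewrite /pw; case: pickP => [w /andP [-> ->] //|].
  by have [w wE bw] := path_w d0 d; move/(_ w); rewrite wE bw eqxx.
apply/imsetP; exists (\big[@fx D/f0 D]_(d | t d) pw d).
  apply: (big_ind (fun f => f \in Ea)); first exact: inv_f0.
    by move=> a b; apply: inv_fx.
  by move=> d _; have /andP [] := pwP d.
rewrite (big_morph bd bd_fx bd_f0).
apply/ffunP => e; rewrite big_fx_eval.
rewrite (eq_bigr (fun d => orb d0 e (+) orb d e)); last first.
  by move=> d _; have /andP [_ /eqP ->] := pwP d; rewrite ffunE.
rewrite big_split /= big_xor_const; move: tE; rewrite /parity => /negbTE -> /=.
rewrite (eq_bigr (fun d => (e == d) (+) (sigma e == d) (+) (sigma (sigma e) == d))); last first.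
  by move=> d _; rewrite ffunE.
rewrite !big_split /= !big_xor_eq !tV.
by case: (t e).
Qed.

Lemma parity_fx a b : parity (fx a b) = parity a (+) parity b.
Proof.
rewrite /parity -big_split /=; apply: eq_bigr => d _; by rewrite ffunE.
Qed.

Lemma parity_orb u : parity (orb u) = true.
Proof.
rewrite /parity (eq_bigr (fun d => (d == u) (+) (sigma d == u) (+) (sigma (sigma d) == u))); last first.
  by move=> d _; rewrite ffunE.
rewrite !big_split /=.
have E1 : forall d, (sigma d == u) = (sigma (sigma u) == d).
  by move=> d; rewrite -{1}(s3 u) (inj_eq sigma_inj) eq_sym.
have E2 : forall d, (sigma (sigma d) == u) = (sigma u == d).
  by move=> d; rewrite -{1}(s3 u) !(inj_eq sigma_inj) eq_sym.
rewrite (eq_bigr _ (fun d _ => E1 d)) (eq_bigr _ (fun d _ => E2 d)).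
have Q : forall v, \big[addb/false]_(d in D) (v == d) = true.
  by move=> v; have := big_xor_eq predT v.
rewrite !Q (eq_bigr (fun d => u == d)) ?Q // => d _; exact: eq_sym.
Qed.

Lemma card_Vs_Even : #|Vs| <= 2 * #|EvenV|.
Proof.
have sub : Vs \subset EvenV :|: (fx (orb d0)) @: EvenV.
  apply/subsetP => t tV; rewrite inE; case pt: (parity t).
    apply/orP; right; apply/imsetP; exists (fx (orb d0) t); last by rewrite fxK.
    by rewrite inE inv_fx // ?orb_Vs // parity_fx parity_orb pt.
  by rewrite inE tV pt.
apply: (leq_trans (subset_leq_card sub)); apply: (leq_trans (leq_card_setU _ _)).
by rewrite mul2n -addnn leq_add2l leq_imset_card.
Qed.

Hypothesis planar : planar_map alpha sigma.

Lemma Zs_sub : Zs \subset dl @: Cf.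
Proof.
have sub : dl @: Cf \subset Zs by apply/subsetP => w /imsetP [c cC ->]; apply: dl_Z.
have F1 := card_fibre (inv_fx (p := sigma \o alpha)) (fun a b _ _ => dl_fx a b).
have F2 := card_fibre (inv_fx (p := alpha)) (fun a b _ _ => bd_fx a b).
rewrite -/Cf card_ker_dl (card_inv phi_inj) in F1.
rewrite -/Ea (card_inv alpha_inj) in F2.
have F3 : #|Vs| <= 2 * #|bd @: Ea|.
  apply: (leq_trans card_Vs_Even); rewrite leq_mul2l /=; apply: subset_leq_card.
  by apply/subsetP => t; apply: EvenV_bd.
rewrite /Vs (card_inv sigma_inj) in F3.
have pl : nvertices sigma + nfaces alpha sigma = nedges alpha + 2 := planar.
rewrite /nvertices /nfaces /nedges in pl.
set V := ncomp (frel sigma) setT in F3 pl.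
set F := ncomp (frel (sigma \o alpha)) setT in F1 pl.
set E := ncomp (frel alpha) setT in F2 pl.
set z := #|[set a in Ea | bd a == f0 D]| in F2.
have zE : #|Zs| = z by [].
have le : #|Zs| <= #|dl @: Cf|.
  rewrite zE; set i := #|dl @: Cf| in F1 *.
  set j := #|bd @: Ea| in F2 F3.
  have AB : 2 ^ V * 2 ^ F = 2 ^ E * 4 by rewrite -expnD pl expnD.
  have a0 : 0 < 2 ^ V by rewrite expn_gt0.
  move: AB F1 F2 F3 a0; generalize (2 ^ V) (2 ^ F) (2 ^ E) => a b c AB F1 F2 F3 a0.
  have e : 4 * (j * z) = a * b by rewrite AB F2 mulnC.
  have h : a * b <= 2 * j * b by rewrite leq_mul2r F3 orbT.
  rewrite -e F1 in h.
  have j0 : 0 < j by nia.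
  have : j * z <= j * i by nia.
  by rewrite leq_pmul2l.
by have /subset_cardP := anti_leq (andb_true_intro (conj (subset_leq_card sub) le)); move/(_ sub) => E1;
  apply/subsetP => w; rewrite -E1.
Qed.

End MapS.


Lemma card3I (T : finType) (a b c : T) (M : {set T}) : uniq [:: a; b; c] ->
  #|[set a; b; c] :&: M| = ((a \in M) + (b \in M) + (c \in M))%N.
Proof.
move=> u.
have -> : #|[set a; b; c] :&: M| = \sum_(y in [set a; b; c]) (y \in M).
  rewrite -sum1_card big_mkcond /= [RHS]big_mkcond; apply: eq_bigr => y _.
  by rewrite !inE; case: (_ || _); case: (y \in M).
rewrite (eq_bigl (mem [:: a; b; c])); last by move=> y; rewrite !inE orbA.
by rewrite -big_uniq //= !big_cons big_nil addn0 addnA.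
Qed.

Section Comb.
Variable D : finType.
Notation Fun := {ffun D -> bool}.
Variables (alpha sigma : D -> D).
Hypothesis aK : forall d, alpha (alpha d) = d.
Hypothesis aN : forall d, alpha d != d.
Hypothesis s3 : forall d, sigma (sigma (sigma d)) = d.
Hypothesis sN : forall d, sigma d != d.

Lemma s2N d : sigma (sigma d) != d.
Proof. by apply/eqP => h; have := sN d; rewrite -{1}h s3 eqxx. Qed.
Lemma s21 d : sigma (sigma d) != sigma d.
Proof. by rewrite (inj_eq (sigma_inj s3)). Qed.
Lemma uniq3 d : uniq [:: d; sigma d; sigma (sigma d)].
Proof. by rewrite /= !inE negb_or eq_sym sN eq_sym s2N /= [sigma d == _]eq_sym s21. Qed.

Variable M : {set D}.
Hypothesis pmM : perfect_matching alpha sigma M.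

Lemma Ma d : (alpha d \in M) = (d \in M).
Proof. by have /andP [/forallP /(_ d) /eqP -> _] := pmM. Qed.

Lemma M1 d : ((d \in M) + (sigma d \in M) + (sigma (sigma d) \in M) = 1)%N.
Proof. by have /andP [_ /forallP /(_ d) /eqP] := pmM; rewrite card3I // uniq3. Qed.

Lemma MsN m : m \in M -> (sigma m \notin M) && (sigma (sigma m) \notin M).
Proof. by have := M1 m; case: (m \in M); case: (sigma m \in M); case: (sigma (sigma m) \in M). Qed.

Lemma notM_cases d : d \notin M -> (sigma d \in M) || (sigma (sigma d) \in M).
Proof. by have := M1 d; case: (d \in M); case: (sigma d \in M); case: (sigma (sigma d) \in M). Qed.

Definition rp (S : {set D}) d := res_partner alpha sigma S M d.

Lemma rp_sm S m : m \in M -> rp S (sigma m) =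
  if m \in S then sigma (alpha m) else sigma (sigma (alpha m)).
Proof.
move=> mM; have /andP [_ h] := MsN mM.
by rewrite /rp /res_partner (negbTE h) s3.
Qed.

Lemma rp_ssm S m : m \in M -> rp S (sigma (sigma m)) =
  if m \in S then sigma (sigma (alpha m)) else sigma (alpha m).
Proof. by move=> mM; rewrite /rp /res_partner s3 mM. Qed.

Lemma notM_elim (P : D -> Prop) :
  (forall m, m \in M -> P (sigma m)) -> (forall m, m \in M -> P (sigma (sigma m))) ->
  forall d, d \notin M -> P d.
Proof.
move=> H1 H2 d dM; have /orP [h|h] := notM_cases dM.
  by have := H2 _ h; rewrite s3.
by have := H1 _ h; rewrite s3.
Qed.

Lemma rp_notM S d : d \notin M -> rp S d \notin M.
Proof.
move: d; apply: (@notM_elim (fun d => rp S d \notin M)) => m mM;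
  [rewrite rp_sm // | rewrite rp_ssm //]; have bM : alpha m \in M by rewrite Ma.
all: by have /andP [h1 h2] := MsN bM; case: (m \in S).
Qed.

Lemma rp_inv S d : state alpha M S -> d \notin M -> rp S (rp S d) = d.
Proof.
move=> /andP [SM /forallP Sa]; have Sa' m : (alpha m \in S) = (m \in S) by rewrite (eqP (Sa m)).
move: d; apply: (@notM_elim (fun d => rp S (rp S d) = d)) => m mM; have bM : alpha m \in M by rewrite Ma.
  by rewrite rp_sm //; case mS: (m \in S); [rewrite (rp_sm _ bM) | rewrite (rp_ssm _ bM)]; rewrite Sa' mS aK.
by rewrite rp_ssm //; case mS: (m \in S); [rewrite (rp_ssm _ bM) | rewrite (rp_sm _ bM)]; rewrite Sa' mS aK.
Qed.

Definition crv S := curve_rel alpha sigma M S.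

Lemma crv_sym S : state alpha M S -> connect_sym (crv S).
Proof.
move=> st.
have H d e : crv S d e -> crv S e d.
  rewrite /crv /curve_rel => /and3P [dM eM /orP [] /eqP E]; rewrite eM dM /= E.
    by rewrite aK eqxx.
  by have := rp_inv st dM; rewrite /rp => ->; rewrite eqxx orbT.
by apply: sym_connect_sym => d e; apply/idP/idP; apply: H.
Qed.

Definition Pc S (x : Fun) :=
  [&& [forall d, (d \in M) ==> ~~ x d], [forall d, (d \notin M) ==> (x (alpha d) == x d)] &
      [forall d, (d \notin M) ==> (x (rp S d) == x d)]].

Lemma FrE S x : state alpha M S -> (x \in Fr (crv S) (~: M)) = Pc S x.
Proof.
move=> st; apply/FrP/idP.
  move=> [H1 H2]; apply/and3P; split; apply/forallP => d; apply/implyP => dM.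
  - by rewrite H2 // inE negbK.
  - by rewrite (H1 d (alpha d)) // /crv /curve_rel dM Ma dM eqxx.
  - by rewrite (H1 d (rp S d)) // /crv /curve_rel dM rp_notM // eqxx orbT.
move=> /and3P [/forallP H1 /forallP H2 /forallP H3]; split.
  move=> d e /and3P [dM eM /orP [] /eqP ->].
    by rewrite (eqP (implyP (H2 d) dM)).
  by rewrite (eqP (implyP (H3 d) dM)).
by move=> d; rewrite inE negbK => dM; apply/negbTE; apply: (implyP (H1 d)).
Qed.

Lemma ncurves_card S : state alpha M S -> 2 ^ ncurves alpha sigma M S = #|Fr (crv S) (~: M)|.
Proof.
move=> st; rewrite (card_Fr (crv_sym st)) //.
by move=> d e /and3P [dM eM _]; rewrite !inE dM eM.
Qed.


Definition cond (S : {set D}) (x : Fun) (m : D) :=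
  if m \in S then (x (sigma (alpha m)) == x (sigma m)) && (x (sigma (sigma (alpha m))) == x (sigma (sigma m)))
  else (x (sigma (sigma (alpha m))) == x (sigma m)) && (x (sigma (alpha m)) == x (sigma (sigma m))).

Lemma PcE (S : {set D}) (x : Fun) : Pc S x =
  [&& [forall d, (d \in M) ==> ~~ x d], [forall d, (d \notin M) ==> (x (alpha d) == x d)] &
      [forall m, (m \in M) ==> cond S x m]].
Proof.
rewrite /Pc; congr [&& _, _ & _]; apply/forallP/forallP.
  move=> H m; apply/implyP => mM; have /andP [h1 h2] := MsN mM.
  have := implyP (H (sigma m)) h1; have := implyP (H (sigma (sigma m))) h2.
  by rewrite (rp_sm _ mM) (rp_ssm _ mM) /cond; case: (m \in S) => /eqP -> /eqP ->; rewrite !eqxx.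
move=> H d; apply/implyP; move: d.
apply: (@notM_elim (fun d => x (rp S d) == x d)) => m mM; have := implyP (H m) mM;
  rewrite /cond; [rewrite (rp_sm _ mM) | rewrite (rp_ssm _ mM)]; case: (m \in S) => /andP [/eqP a /eqP b]; apply/eqP; by [apply: a | apply: b].
Qed.

Definition proper (x : Fun) :=
  [&& [forall d, (d \in M) ==> ~~ x d], [forall d, (d \notin M) ==> (x (alpha d) == x d)] &
      [forall m, (m \in M) ==> (x (sigma m) != x (sigma (sigma m)))]].
Definition Sx (x : Fun) := [set m in M | x (sigma m) != x (sigma (sigma (alpha m)))].
Definition freeb (x : Fun) m := [&& m \in M, x (sigma m) == x (sigma (sigma m)),
  x (sigma (alpha m)) == x (sigma (sigma (alpha m))) & x (sigma m) == x (sigma (alpha m))].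

Lemma Pc_proper (S : {set D}) (x : Fun) : state alpha M S -> Pc S x -> ~~ [exists m, freeb x m] -> proper x && (S == Sx x).
Proof.
move=> /andP [/subsetP SM _]; rewrite PcE => /and3P [H1 H2 /forallP H] /existsPn nf.
rewrite /proper H1 H2 /=.
have pr m : m \in M -> x (sigma m) != x (sigma (sigma m)).
  move=> mM; have := implyP (H m) mM; have := nf m; rewrite /freeb /cond mM /=.
  by case: (m \in S); case: (x (sigma m)); case: (x (sigma (sigma m)));
    case: (x (sigma (alpha m))); case: (x (sigma (sigma (alpha m)))).
apply/andP; split; first by apply/forallP => m; apply/implyP; apply: pr.
apply/eqP/setP => m; rewrite inE; case mM: (m \in M); last first.
  by apply/negbTE; apply: contra (negbT mM); apply: SM.
have bM : alpha m \in M by rewrite Ma.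
have := implyP (H m) mM; have := pr _ bM; rewrite /cond /=.
by case: (m \in S); case: (x (sigma m)); case: (x (sigma (sigma m)));
    case: (x (sigma (alpha m))); case: (x (sigma (sigma (alpha m)))).
Qed.

Lemma proper_Pc x : proper x -> state alpha M (Sx x) && Pc (Sx x) x.
Proof.
move=> /and3P [H1 H2 /forallP H3]; have pr m : m \in M -> x (sigma m) != x (sigma (sigma m)).
  by move=> mM; apply: (implyP (H3 m)).
apply/andP; split.
  apply/andP; split; first by apply/subsetP => m; rewrite inE => /andP [].
  apply/forallP => m; rewrite !inE Ma aK; case mM: (m \in M) => //=.
  have bM : alpha m \in M by rewrite Ma.
  by move: (pr _ mM) (pr _ bM); case: (x (sigma m)); case: (x (sigma (sigma m)));
    case: (x (sigma (alpha m))); case: (x (sigma (sigma (alpha m)))).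
rewrite PcE H1 H2 /=; apply/forallP => m; apply/implyP => mM.
have bM : alpha m \in M by rewrite Ma.
rewrite /cond inE mM /=.
by move: (pr _ mM) (pr _ bM); case: (x (sigma m)); case: (x (sigma (sigma m)));
    case: (x (sigma (alpha m))); case: (x (sigma (sigma (alpha m)))).
Qed.

Lemma proper_nofree x : proper x -> ~~ [exists m, freeb x m].
Proof.
move=> /and3P [_ _ /forallP H3]; apply/existsPn => m; rewrite /freeb.
by case mM: (m \in M) => //=; have := implyP (H3 m) mM; case: (_ == _).
Qed.


Local Open Scope ring_scope.

Definition sg (S : {set D}) : int := (-1) ^+ (#|S| %/ 2).

Lemma sg_add2 (A B : {set D}) : #|A| = (#|B| + 2)%N -> sg A = - sg B.
Proof.
move=> E; rewrite /sg E.
have -> : ((#|B| + 2) %/ 2 = (#|B| %/ 2).+1)%N by rewrite divnDr ?dvdnn // divnn addn1.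
by rewrite exprS mulN1r.
Qed.

Section Toggle.
Variables (x : Fun) (m0 : D).
Hypothesis fm : freeb x m0.
Let E0 := [set m0; alpha m0].
Let tg (S : {set D}) := (S :\: E0) :|: (E0 :\: S).

Lemma tg_in S d : (d \in tg S) = (d \in S) (+) (d \in E0).
Proof. by rewrite /tg in_setU !in_setD; case: (d \in S); case: (d \in E0). Qed.

Lemma tgK : involutive tg.
Proof. by move=> S; apply/setP => d; rewrite !tg_in addbK. Qed.

Lemma E0a d : (alpha d \in E0) = (d \in E0).
Proof.
rewrite !inE -{1}(aK m0) !(inj_eq (alpha_inj aK)) orbC //.
Qed.

Lemma m0M : m0 \in M.
Proof. by case/and4P: fm. Qed.

Lemma E0M d : d \in E0 -> d \in M.
Proof. by rewrite !inE => /orP [] /eqP ->; rewrite ?Ma m0M. Qed.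

Lemma st_tg S : state alpha M S -> state alpha M (tg S).
Proof.
move=> /andP [/subsetP SM /forallP Sa]; apply/andP; split.
  apply/subsetP => d; rewrite tg_in; case dS: (d \in S); first by move=> _; apply: SM.
  by move/E0M.
apply/forallP => d; rewrite !tg_in E0a (eqP (Sa d)).
by [].
Qed.

Lemma st_tgE S : state alpha M (tg S) = state alpha M S.
Proof. by apply/idP/idP => h; [rewrite -(tgK S)|]; apply: st_tg. Qed.

Lemma free_val m : m \in E0 -> x (sigma (alpha m)) = x (sigma (sigma (alpha m))).
Proof.
case/and4P: fm => _ /eqP h1 /eqP h2 _.
by rewrite !inE => /orP [] /eqP ->; rewrite ?aK.
Qed.

Lemma rp_tg S d : x (rp S d) = x (rp (tg S) d).
Proof.
rewrite /rp /res_partner.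
case: (sigma d \in M); [set m := sigma d | set m := sigma (sigma d)].
all: rewrite tg_in; case mE: (m \in E0); rewrite ?addbF ?addbT //.
all: by have := free_val mE; case: (m \in S) => /= ->.
Qed.

Lemma Pc_tg S : Pc (tg S) x = Pc S x.
Proof.
rewrite /Pc; congr [&& _, _ & _]; apply/eq_forallb => d; by rewrite (rp_tg S d).
Qed.

Lemma E0S S d : state alpha M S -> d \in E0 -> (d \in S) = (m0 \in S).
Proof.
move=> /andP [_ /forallP Sa]; rewrite !inE => /orP [] /eqP -> //.
by rewrite (eqP (Sa m0)).
Qed.

Lemma cardE0 : #|E0| = 2%N.
Proof. by rewrite cards2 eq_sym aN. Qed.

Lemma sg_tg S : state alpha M S -> sg (tg S) = - sg S.
Proof.
move=> st; case m0S: (m0 \in S).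
  have e1 : S :&: E0 = E0.
    apply/setP => d; rewrite in_setI; case dE: (d \in E0); rewrite ?andbF // andbT.
    by rewrite (E0S st dE).
  have e2 : S :\: E0 = tg S.
    apply/setP => d; rewrite tg_in in_setD; case dE: (d \in E0); rewrite ?addbF ?andbT //=.
    by rewrite (E0S st dE) m0S.
  have := cardsID E0 S; rewrite e1 e2 cardE0 => h.
  by rewrite (sg_add2 (A := S) (B := tg S)) ?opprK // addnC.
have e1 : tg S :&: E0 = E0.
  apply/setP => d; rewrite in_setI tg_in; case dE: (d \in E0); rewrite ?andbF // andbT.
  by rewrite (E0S st dE) m0S.
have e2 : tg S :\: E0 = S.
  apply/setP => d; rewrite in_setD tg_in; case dE: (d \in E0); rewrite ?addbF ?andbT //=.
  by rewrite (E0S st dE) m0S.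
have := cardsID E0 (tg S); rewrite e1 e2 cardE0 => h.
by apply: sg_add2; rewrite -h addnC.
Qed.

Lemma sum_free :
  (\sum_(S : {set D} | state alpha M S) (if Pc S x then sg S else 0)) = 0.
Proof.
set L := LHS.
have : L = - L.
  rewrite {1}/L (reindex_inj (inv_inj tgK)) /= /L -sumrN.
  apply: eq_big => S; first by rewrite st_tgE.
  by move=> st; rewrite st_tgE in st; rewrite Pc_tg sg_tg //; case: (Pc S x); rewrite ?oppr0.
clearbody L; move=> h; lia.
Qed.

End Toggle.

Lemma sum_states (x : Fun) :
  (\sum_(S : {set D} | state alpha M S) (if Pc S x then sg S else 0)) =
  if proper x then sg (Sx x) else 0.
Proof.
case: (boolP [exists m, freeb x m]) => [/existsP [m0 fm] | nf].
  rewrite (sum_free fm); case px: (proper x) => //.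
  by have := proper_nofree px; rewrite (introT existsP (ex_intro _ m0 fm)).
case px: (proper x).
  have /andP [st pc] := proper_Pc px.
  rewrite (bigD1 (Sx x)) //= pc big1 ?addr0 // => S /andP [stS ne].
  case pcS: (Pc S x) => //.
  by have /andP [_ /eqP e] := Pc_proper stS pcS nf; rewrite e eqxx in ne.
rewrite big1 // => S stS; case pcS: (Pc S x) => //.
by have /andP [] := Pc_proper stS pcS nf; rewrite px.
Qed.


Local Close Scope ring_scope.

Lemma pairing (A : {set D}) (f : D -> nat) :
  (forall d, d \in A -> alpha d \in A) -> (forall d, d \in A -> f (alpha d) = f d) ->
  ~~ odd (\sum_(d in A) f d).
Proof.
move=> Acl fa.
rewrite (bigID (fun d => enum_rank d < enum_rank (alpha d))%N) /=.
rewrite [X in (_ + X)%N](reindex_inj (alpha_inj aK)) /=.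
rewrite [X in (_ + X)%N](eq_big (fun d => (d \in A) && (enum_rank d < enum_rank (alpha d))%N) f).
- by rewrite addnn odd_double.
- move=> d; rewrite aK; case dA: (d \in A).
    rewrite (Acl _ dA) /= -leqNgt leq_eqVlt.
    have ne : (enum_rank d == enum_rank (alpha d) :> nat) = false.
      apply/negbTE/eqP => /val_inj /enum_rank_inj h; by have := aN d; rewrite -h eqxx.
    by rewrite ne.
  by case aA: (alpha d \in A) => //=; have := Acl _ aA; rewrite aK dA.
- by move=> d /andP [aA _]; have := fa _ aA; rewrite aK => ->.
Qed.

Lemma card_sub_sum (A B : {set D}) : #|A :&: B| = \sum_(y in A) (y \in B).
Proof.
rewrite -sum1_card big_mkcond /= [RHS]big_mkcond; apply: eq_bigr => y _.
by rewrite !inE; case: (y \in A); case: (y \in B).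
Qed.

Hypothesis conn : map_connected alpha sigma.
Hypothesis planar : planar_map alpha sigma.
Variable d0 : D.

Lemma sign_even (x : Fun) : proper x -> ~~ odd (#|Sx x| %/ 2).
Proof.
move=> /and3P [/forallP H1 /forallP H2 /forallP H3].
have pr m : m \in M -> x (sigma m) != x (sigma (sigma m)) by move=> mM; apply: (implyP (H3 m)).
have xM d : d \in M -> x d = false by move=> dM; apply/negbTE; apply: (implyP (H1 d)).
have xa d : d \notin M -> x (alpha d) = x d by move=> dM; apply/eqP; apply: (implyP (H2 d)).
pose w : Fun := [ffun d => (d \in M) || x d].
have wZ : w \in Zs alpha sigma.
  rewrite inE; apply/andP; split.
    apply/invP => d; rewrite !ffunE Ma; case dM: (d \in M) => //=.
    by rewrite xa ?dM.
  apply/eqP/ffunP => d; rewrite !ffunE.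
  have := M1 d; case dM: (d \in M); case sM: (sigma d \in M); case ssM: (sigma (sigma d) \in M) => //= _.
  - by move: (pr _ dM); case: (x (sigma d)); case: (x (sigma (sigma d))).
  - by move: (pr _ sM); rewrite s3; case: (x d); case: (x (sigma (sigma d))).
  - by move: (pr _ ssM); rewrite !s3; case: (x d); case: (x (sigma d)).
have /imsetP [c cC dlc] := subsetP (Zs_sub aK s3 conn d0 planar) w wZ.
have Hc d : c (sigma (alpha d)) = c d by move/invP: cC => /(_ d).
have Hw d : c d (+) c (alpha d) = w d by rewrite dlc ffunE.
pose g m := c (alpha m) (+) x (sigma m).
have cl1 m : m \in M -> (m \in Sx x) = g m (+) g (alpha m).
  move=> mM; have bM : alpha m \in M by rewrite Ma.
  have := Hw m; have := pr _ bM; rewrite /g inE mM aK ffunE mM /=.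
  by case: (c m); case: (c (alpha m)); case: (x (sigma m)); case: (x (sigma (alpha m)));
     case: (x (sigma (sigma (alpha m)))).
pose d2 m := if x (sigma m) then sigma (sigma m) else sigma m.
have cl2 m : m \in M -> g m = c (d2 m).
  move=> mM; rewrite /g /d2; have /andP [sM _] := MsN mM.
  have e1 : c (sigma m) = c (alpha m) by have := Hc (alpha m); rewrite aK.
  case xs: (x (sigma m)).
    have e2 : c (sigma (sigma m)) = c (alpha (sigma m)) by have := Hc (alpha (sigma m)); rewrite aK.
    have := Hw (sigma m); rewrite ffunE xs orbT e2 -e1.
    by case: (c (sigma m)); case: (c (alpha (sigma m))).
  by rewrite e1 addbF.
pose X2 := [set d | (d \notin M) && ~~ x d].
pose mv d := if sigma d \in M then sigma d else sigma (sigma d).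
have N1 : (\sum_(m in M) g m = \sum_(d in X2) c d)%N.
  rewrite (reindex_onto d2 mv (P := fun d => d \in X2)) /=; last first.
    move=> d; rewrite inE => /andP [dM xd]; rewrite /mv /d2.
    case sM: (sigma d \in M).
      have := pr _ sM; rewrite s3 (negbTE xd).
      by case: (x (sigma (sigma d))).
    have ssM : sigma (sigma d) \in M by have := notM_cases dM; rewrite sM.
    by rewrite s3 (negbTE xd).
  apply: eq_big => [j|j jM]; last by rewrite cl2.
  case jM: (j \in M).
    have /andP [sM ssM] := MsN jM; have := pr _ jM.
    rewrite /d2 /mv inE; case xs: (x (sigma j)) => /=.
      by rewrite ssM s3 jM eqxx /=; case: (x _).
    by rewrite sM (negbTE ssM) s3 eqxx xs.
  rewrite inE; apply/esym/negbTE/negP => /andP [/andP [nM _] /eqP e].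
  move: (notM_cases nM) e; rewrite /mv; case: ifP => [h _ e|h /= h2 e].
    by rewrite -e h in jM.
  by rewrite -e h2 in jM.
have N2 : ~~ odd (\sum_(m in M) g m).
  rewrite N1; apply: pairing => d; rewrite inE => /andP [dM xd].
    by rewrite inE Ma dM xa.
  by have := Hw d; rewrite ffunE (negbTE dM) (negbTE xd) /=; case: (c d); case: (c (alpha d)).
have K2 : ~~ odd (\sum_(m in M) (g m * g (alpha m))).
  by apply: pairing => m mM; rewrite ?Ma // aK mulnC.
have N3 : (\sum_(m in M) g (alpha m) = \sum_(m in M) g m).
  rewrite [RHS](reindex_inj (alpha_inj aK)) /=; apply: eq_bigl => m; by rewrite Ma.
have S1 : (#|Sx x| + 2 * \sum_(m in M) (g m * g (alpha m)) = 2 * \sum_(m in M) g m).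
  have -> : #|Sx x| = \sum_(m in M) (g m (+) g (alpha m)).
    rewrite -(setIidPr (_ : Sx x \subset M)); last by apply/subsetP => m; rewrite inE => /andP [].
    rewrite card_sub_sum; apply: eq_bigr => m mM; by rewrite cl1.
  rewrite big_distrr /= -big_split /= mul2n -addnn -{2}N3 -big_split /=.
  apply: eq_bigr => m _; by case: (g m); case: (g (alpha m)).
move: N2 K2 S1; generalize (\sum_(m in M) g m) (\sum_(m in M) (g m * g (alpha m))) => n k.
move=> /negbTE on /negbTE ok hs.
have hn := odd_double_half n; have hk := odd_double_half k; rewrite on in hn; rewrite ok in hk.
rewrite -!muln2 /= in hn hk.
have -> : #|Sx x| = 2 * (2 * (n./2 - k./2)) by lia.
by rewrite mulKn // oddM.
Qed.

Local Open Scope ring_scope.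

Lemma bracket_eq : bracket2 alpha sigma M (1 : int) = (#|[set x : Fun | proper x]|)%:R.
Proof.
rewrite /bracket2 invr1.
have two : (1 + 1 : int) = 2%:R by [].
rewrite two.
rewrite (eq_bigr (fun S => \sum_(x : Fun) (if Pc S x then sg S else 0))); last first.
  move=> S st; rewrite -natrX ncurves_card // mulr_natr -sumr_const big_mkcond /=.
  by apply: eq_bigr => y _; rewrite FrE.
rewrite exchange_big /=.
rewrite (eq_bigr (fun x : Fun => if proper x then 1 else 0)); last first.
  move=> y _; rewrite sum_states; case py: (proper y) => //.
  by rewrite /sg -signr_odd (negbTE (sign_even py)).
by rewrite -big_mkcond /= sumr_const cardsE.
Qed.

End Comb.

Definition k0 : 'I_3 := @Ordinal 3 0 isT.
Definition k1 : 'I_3 := @Ordinal 3 1 isT.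
Definition k2 : 'I_3 := @Ordinal 3 2 isT.

Lemma I3 (a b e : 'I_3) : a != b -> b != e -> a != e -> ((a == k0) + (b == k0) + (e == k0) = 1)%N.
Proof. by case: a => [[|[|[|//]]] ?]; case: b => [[|[|[|//]]] ?]; case: e => [[|[|[|//]]] ?]. Qed.
Lemma I3b (a b e : 'I_3) : a != b -> b != e -> a != e -> a == k0 -> (b == k2) != (e == k2).
Proof. by case: a => [[|[|[|//]]] ?]; case: b => [[|[|[|//]]] ?]; case: e => [[|[|[|//]]] ?]. Qed.
Lemma I3c (a : 'I_3) : a != k0 -> (if a == k2 then k2 else k1) = a.
Proof. by case: a => [[|[|[|//]]] ?] //= _; apply: val_inj. Qed.

Section Tait.
Variable D : finType.
Notation Fun := {ffun D -> bool}.
Variables (alpha sigma : D -> D).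
Hypothesis aK : forall d, alpha (alpha d) = d.
Hypothesis aN : forall d, alpha d != d.
Hypothesis s3 : forall d, sigma (sigma (sigma d)) = d.
Hypothesis sN : forall d, sigma d != d.

Definition Mc (c : {ffun D -> 'I_3}) := [set d | c d == k0].
Definition enc (M : {set D}) (x : Fun) : {ffun D -> 'I_3} :=
  [ffun d => if d \in M then k0 else if x d then k2 else k1].
Definition dec (c : {ffun D -> 'I_3}) : Fun := [ffun d => c d == k2].

Lemma tait_pm c : tait_coloring alpha sigma c -> perfect_matching alpha sigma (Mc c).
Proof.
move=> /forallP T; apply/andP; split; apply/forallP => d; have /andP [/eqP ca /and3P [n1 n2 n3]] := T d.
  by rewrite !inE ca.
by rewrite card3I ?uniq3 // !inE I3.
Qed.

Section FixM.
Variable M : {set D}.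
Hypothesis pmM : perfect_matching alpha sigma M.

Lemma Mc_enc x : Mc (enc M x) = M.
Proof. by apply/setP => d; rewrite !inE ffunE; case: (d \in M); case: (x d). Qed.

Lemma enc_tait x : proper alpha sigma M x -> tait_coloring alpha sigma (enc M x).
Proof.
move=> /and3P [/forallP H1 /forallP H2 /forallP H3].
have pr m : m \in M -> x (sigma m) != x (sigma (sigma m)) by move=> mM; apply: (implyP (H3 m)).
apply/forallP => d; rewrite !ffunE (Ma pmM).
apply/andP; split.
  case dM: (d \in M) => //.
  by rewrite (eqP (implyP (H2 d) (negbT dM))).
have := M1 s3 sN pmM d; case dM: (d \in M); case sM: (sigma d \in M); case ssM: (sigma (sigma d) \in M) => //= _.
- by move: (pr _ dM); case: (x (sigma d)); case: (x (sigma (sigma d))).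
- by move: (pr _ sM); rewrite s3; case: (x d); case: (x (sigma (sigma d))).
- by move: (pr _ ssM); rewrite !s3; case: (x d); case: (x (sigma d)).
Qed.

Lemma dec_enc x : proper alpha sigma M x -> dec (enc M x) = x.
Proof.
move=> /and3P [/forallP H1 _ _]; apply/ffunP => d; rewrite !ffunE.
case dM: (d \in M); last by case: (x d).
by have := implyP (H1 d) dM; case: (x d).
Qed.

Lemma dec_proper c : tait_coloring alpha sigma c -> Mc c = M -> proper alpha sigma M (dec c).
Proof.
move=> /forallP T Me; apply/and3P; split; apply/forallP => d; apply/implyP; rewrite -Me inE => dM;
  have /andP [/eqP ca /and3P [n1 n2 n3]] := T d; rewrite !ffunE.
- by rewrite (eqP dM).
- by rewrite ca.
- exact: (I3b n1 n2 n3 dM).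
Qed.

Lemma enc_dec c : tait_coloring alpha sigma c -> Mc c = M -> enc M (dec c) = c.
Proof.
move=> _ Me; apply/ffunP => d; rewrite !ffunE -Me inE.
case: ifP => [/eqP -> //|/negbT h]; exact: I3c.
Qed.

Lemma card_M : #|[set c | tait_coloring alpha sigma c && (Mc c == M)]| = #|[set x : Fun | proper alpha sigma M x]|.
Proof.
have -> : [set c | tait_coloring alpha sigma c && (Mc c == M)] = enc M @: [set x : Fun | proper alpha sigma M x].
  apply/setP => c; rewrite inE; apply/idP/idP.
    move=> /andP [T /eqP Me]; apply/imsetP; exists (dec c); first by rewrite inE dec_proper.
    by rewrite enc_dec.
  move=> /imsetP [x]; rewrite inE => px ->.
  by rewrite enc_tait // Mc_enc eqxx.
rewrite card_in_imset // => x y; rewrite !inE => px py e.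
by rewrite -(dec_enc px) e dec_enc.
Qed.

End FixM.

Lemma tait_count :
  (\sum_(M : {set D} | perfect_matching alpha sigma M) #|[set x : Fun | proper alpha sigma M x]|)%N
  = n_tait alpha sigma.
Proof.
rewrite /n_tait -sum1dep_card (partition_big Mc (perfect_matching alpha sigma)) /=; last first.
  by move=> c; apply: tait_pm.
apply: eq_bigr => M pm; by rewrite sum1dep_card card_M.
Qed.

End Tait.

Local Open Scope ring_scope.
Theorem theorem1p6 (D : finType) (alpha sigma : D -> D) :
  trivalent_map alpha sigma ->
  map_connected alpha sigma ->
  planar_map alpha sigma ->
  T_poly alpha sigma (1 : int) = (n_tait alpha sigma)%:Z.
Proof.
move=> [aK [aN [s3 sN]]] conn planar.
have [d0|D0] := pickP (fun _ : D => true); last first.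
  exfalso; move: planar; rewrite /planar_map /nvertices /nfaces /nedges /ncomp.
  have E : forall (r : rel D), [set [set y | connect r x y] | x in [set: D]] = set0.
    by move=> r; apply/setP => S; rewrite inE; apply/imsetP => [[x _ _]]; have := D0 x.
  by rewrite !E cards0.
rewrite /T_poly (eq_bigr (fun M => (#|[set x : {ffun D -> bool} | proper alpha sigma M x]|)%:R)); last first.
  by move=> M pm; rewrite (bracket_eq aK aN s3 sN pm conn planar d0).
by rewrite -natr_sum tait_count // natz.
Qed.
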